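(* Let $a\in\mathbb{C}$ with $|a-\tfrac14|=\tfrac14$ and $a\neq 0$, and let $\varphi(z)=az^2+(1-2a)z+a$. Then the iterates $\varphi_n$ converge to the constant $1$ uniformly on all of $\mathbb{D}$, i.e. $\lim_{n\to\infty}\sup_{z\in\mathbb{D}}|\varphi_n(z)-1|=0$.
   Context: $\mathbb{D}$ is the open unit disk. $\varphi_n$ denotes the $n$-th iterate $\varphi\circ\cdots\circ\varphi$ ($n$ times). Such $\varphi$ is an analytic self-map of $\mathbb{D}$ with $\varphi(1)=1$, $\varphi'(1)=1$. *)

(* Defs.v *)
From Stdlib Require Import Reals.
From Coquelicot Require Import Coquelicot.
Open Scope C_scope.

Definition phi (a : C) (z : C) : C := a * (z * z) + (1 - 2 * a) * z + a.

Fixpoint iter_fn (f : C -> C) (n : nat) (z : C) : C :=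
  match n with
  | O => z
  | S m => f (iter_fn f m z)
  end.

(* Main.v *)
Require Import Defs.
From Stdlib Require Import Reals Lra Psatz.
From Coquelicot Require Import Coquelicot.
Open Scope R_scope.

Definition Ef (t x y : R) := 2*x + t*y - t*t/2.

Lemma step_m t x y : Ef t x y > 0 -> x*x + y*y > 0.
Proof. unfold Ef; intros H.
  destruct (Req_dec x 0); destruct (Req_dec y 0); subst; try nra. Qed.

Lemma step_E t x y : Ef t x y > 0 ->
  Ef t (x + 1 + x/(x*x+y*y)) (y - y/(x*x+y*y)) - Ef t x y
  = (2*(x*x+y*y) + 2*x - t*y)/(x*x+y*y).
Proof. intros H; pose proof (step_m t x y H). unfold Ef. field. lra. Qed.

Lemma step_E1 t x y : Ef t x y > 0 ->
  Ef t (x + 1 + x/(x*x+y*y)) (y - y/(x*x+y*y)) >= Ef t x y.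
Proof. intros H; pose proof (step_m t x y H) as Hm.
  pose proof (step_E t x y H) as He.
  assert (0 <= (2*(x*x+y*y) + 2*x - t*y)/(x*x+y*y)).
  { apply Rdiv_le_0_compat; [|lra]. unfold Ef in H. nra. }
  lra. Qed.

Lemma step_E2 t x y : Ef t x y > 0 -> x < -(4+t*t) ->
  Ef t (x + 1 + x/(x*x+y*y)) (y - y/(x*x+y*y)) >= Ef t x y + 1.
Proof. intros H Hx; pose proof (step_m t x y H) as Hm.
  pose proof (step_E t x y H) as He.
  assert (1 <= (2*(x*x+y*y) + 2*x - t*y)/(x*x+y*y)).
  { apply Rmult_le_reg_r with (x*x+y*y); [lra|].
    replace ((2*(x*x+y*y) + 2*x - t*y)/(x*x+y*y)*(x*x+y*y)) with (2*(x*x+y*y) + 2*x - t*y) by (field; lra).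
    assert ((x+1)*(x+1) >= (3+t*t)*(3+t*t)) by nra.
    nra. }
  lra. Qed.

Lemma step_x t x y : Ef t x y > 0 -> x + 1 + x/(x*x+y*y) >= x + 3/4.
Proof. intros H; pose proof (step_m t x y H) as Hm.
  assert (x/(x*x+y*y) >= -1/4).
  { apply Rle_ge. apply Rmult_le_reg_r with (x*x+y*y); [lra|].
    replace (x/(x*x+y*y)*(x*x+y*y)) with x by (field; lra).
    unfold Ef in H. assert (0 <= x*x + (y-t)*(y-t)) by (pose proof (Rle_0_sqr x); pose proof (Rle_0_sqr (y-t)); unfold Rsqr in *; lra).
    assert (x*x+y*y + 4*x >= 0) by nra. lra. }
  lra. Qed.

Definition Phi t x y := Ef t x y + Rmax x (-(4+t*t)).

Lemma step_Phi t x y : Ef t x y > 0 ->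
  Phi t (x + 1 + x/(x*x+y*y)) (y - y/(x*x+y*y)) >= Phi t x y + 3/4.
Proof. intros H. unfold Phi.
  pose proof (step_x t x y H). pose proof (step_E1 t x y H).
  destruct (Rlt_dec x (-(4+t*t))).
  - pose proof (step_E2 t x y H r).
    pose proof (Rmax_l (x + 1 + x/(x*x+y*y)) (-(4+t*t))).
    pose proof (Rmax_r (x + 1 + x/(x*x+y*y)) (-(4+t*t))).
    rewrite (Rmax_right x) by lra. lra.
  - rewrite (Rmax_left x) by lra.
    pose proof (Rmax_l (x + 1 + x/(x*x+y*y)) (-(4+t*t))). lra.
Qed.

Lemma Phi_bound t x y : Phi t x y <= (3 + Rabs t) * (Rabs x + Rabs y).
Proof. unfold Phi, Ef.
  assert (Rmax x (-(4+t*t)) <= Rabs x).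
  { apply Rmax_lub. apply Rle_abs. pose proof (Rabs_pos x). nra. }
  assert (t*y <= Rabs t * Rabs y).
  { rewrite <- Rabs_mult. apply Rle_abs. }
  pose proof (Rle_abs x). pose proof (Rabs_pos t). pose proof (Rabs_pos y).
  pose proof (Rabs_pos x). nra. Qed.

Fixpoint useq (u0 : C) (n : nat) : C :=
  match n with O => u0 | S k => let u := useq u0 k in (u + 1 + /u)%C end.

Lemma step_comp (u : C) :
  fst (u + 1 + /u)%C = fst u + 1 + fst u/(fst u*fst u + snd u*snd u) /\
  snd (u + 1 + /u)%C = snd u - snd u/(fst u*fst u + snd u*snd u).
Proof. destruct u as [x y]. simpl. rewrite !Rmult_1_r. split; lra. Qed.

Lemma nz_of t (u : C) : Ef t (fst u) (snd u) > 0 -> u <> 0%C /\ (u + 1)%C <> 0%C.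
Proof. intros H; split; intro Heq.
  - assert (fst u = 0) by (rewrite Heq; reflexivity).
    assert (snd u = 0) by (rewrite Heq; reflexivity).
    unfold Ef in H. rewrite H0, H1 in H. nra.
  - assert (fst (u+1)%C = 0) by (rewrite Heq; reflexivity).
    assert (snd (u+1)%C = 0) by (rewrite Heq; reflexivity).
    simpl in H0, H1. unfold Ef in H. replace (fst u) with (-1) in H by lra.
    replace (snd u) with 0 in H by lra. nra.
Qed.

Lemma phi_step (a u : C) : a <> 0%C -> u <> 0%C -> (u + 1)%C <> 0%C ->
  phi a (1 - /(a*(u+1)))%C = (1 - /(a*((u + 1 + /u) + 1)))%C.
Proof. intros Ha Hu Hu1.
  assert (E : ((u + 1 + /u) + 1 = (u+1)*(u+1)/u)%C) by (field; auto).
  rewrite E. unfold phi. field. repeat split; auto.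
Qed.

Lemma init_pos (t : R) (z : C) : Cmod z < 1 ->
  Ef t (fst (-((2,t) / (z - 1)) - 1)%C) (snd (-((2,t) / (z - 1)) - 1)%C) > 0.
Proof. intros Hz. destruct z as [x y].
  assert (Hn : x*x + y*y < 1).
  { pose proof (Cmod2_alt (x,y)). pose proof (Cmod_ge_0 (x,y)). simpl in H.
    rewrite !Rmult_1_r in H. nra. }
  simpl. rewrite !Rmult_1_r.
  set (p := x + - (1)). set (q := y + - 0).
  assert (Hpn : p*p + q*q > 0).
  { unfold p, q. assert (x < 1) by nra. nra. }
  assert (Hp : -2*p > p*p+q*q) by (unfold p, q; nra).
  unfold Ef.
  match goal with |- ?e > 0 => replace e with ((4+t*t)*((-2*p - (p*p+q*q))/(2*(p*p+q*q)))) by (field; lra) end.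
  apply Rmult_lt_0_compat. nra. apply Rdiv_lt_0_compat; lra.
Qed.

Lemma orbit (a : C) (t : R) (z u0 : C) (Ha : a <> 0%C) :
  Ef t (fst u0) (snd u0) > 0 -> z = (1 - /(a*(u0+1)))%C -> forall n,
  Ef t (fst (useq u0 n)) (snd (useq u0 n)) > 0 /\
  Phi t (fst (useq u0 n)) (snd (useq u0 n)) >= Phi t (fst u0) (snd u0) + 3/4 * INR n /\
  iter_fn (phi a) n z = (1 - /(a*(useq u0 n+1)))%C.
Proof. intros H0 Hz n. induction n as [|n IH].
  - simpl. split; [auto|split; [lra|auto]].
  - destruct IH as [HE [HP Hi]]. simpl useq.
    set (v := useq u0 n) in *.
    destruct (step_comp v) as [H1 H2].
    rewrite H1, H2. split; [|split].
    + pose proof (step_E1 t _ _ HE). lra.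
    + pose proof (step_Phi t _ _ HE). rewrite S_INR. lra.
    + simpl iter_fn. rewrite Hi. destruct (nz_of t v HE). apply phi_step; auto.
Qed.

Lemma init_eq (a : C) (t : R) (z : C) (Ha : a <> 0%C) (hab : (a * (2,t) = 1)%C) :
  Cmod z < 1 -> z = (1 - /(a*((-((2,t) / (z - 1)) - 1)+1)))%C.
Proof. intros Hz.
    assert (Hz1 : (z - 1)%C <> 0%C).
    { intro E. assert (z = 1%C) by (replace z with ((z - 1) + 1)%C by ring; rewrite E; ring).
      subst z. rewrite Cmod_R, Rabs_R1 in Hz. lra. }
    replace (- ((2, t) / (z - 1)) - 1 + 1)%C with (- ((2, t) / (z - 1)))%C by ring.
    replace (a * - ((2, t) / (z - 1)))%C with (- ((a * (2,t)) / (z - 1)))%C by (field; auto).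
    rewrite hab. field. auto.
Qed.

Theorem mainTheorem2 (a : C) :
  Cmod (a - RtoC (1/4)) = 1/4 -> a <> RtoC 0 ->
  forall eps : R, 0 < eps ->
  exists N : nat, forall n : nat, (N <= n)%nat ->
  forall z : C, Cmod z < 1 ->
  Cmod (iter_fn (phi a) n z - RtoC 1) <= eps.
Proof.
  intros Hc Ha eps Heps.
  assert (Hrel : fst a * fst a + snd a * snd a = fst a / 2).
  { pose proof (Cmod2_alt (a - RtoC (1/4))%C) as H. rewrite Hc in H.
    destruct a as [a1 a2]. simpl in H |- *. rewrite !Rmult_1_r in H. lra. }
  assert (Ha1 : fst a > 0).
  { destruct a as [a1 a2]; simpl in *.
    destruct (Rlt_dec 0 a1); [lra|]. exfalso. apply Ha.
    assert (a1 = 0) by nra. assert (a2 = 0) by nra. subst; reflexivity. }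
  set (t := -2 * snd a / fst a).
  assert (hab : (a * (2,t) = 1)%C).
  { destruct a as [a1 a2]; simpl in *. unfold Cmult; simpl.
    apply injective_projections; simpl.
    - unfold t. simpl. replace (a1 * 2 - a2 * (-2 * a2 / a1)) with (2*(a1*a1+a2*a2)/a1) by (field; lra).
      rewrite Hrel. field. lra.
    - unfold t; simpl. field. lra. }
  assert (HCa : Cmod a > 0).
  { pose proof (Cmod_ge_0 a). destruct (Req_dec (Cmod a) 0) as [E|]; [|lra].
    exfalso. apply Ha. apply Cmod_eq_0. auto. }
  set (R := /(eps * Cmod a)).
  assert (HR : R > 0) by (unfold R; apply Rinv_0_lt_compat; nra).
  set (K := 4 + t*t).
  set (M := (3 + Rabs t) * (2*R+1)).
  destruct (INR_unbounded ((4/3)*(K+M))) as [N HN].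
  exists N. intros n Hn z Hz.
  set (u0 := (-((2,t) / (z - 1)) - 1)%C).
  pose proof (init_pos t z Hz) as H0. fold u0 in H0.
  pose proof (init_eq a t z Ha hab Hz) as Hzeq. fold u0 in Hzeq.
  destruct (orbit a t z u0 Ha H0 Hzeq n) as [HE [HP Hi]].
  rewrite Hi.
  set (v := useq u0 n) in *.
  assert (HP0 : Phi t (fst u0) (snd u0) >= -K).
  { unfold Phi. pose proof (Rmax_r (fst u0) (-(4+t*t))). unfold K. lra. }
  assert (HnN : INR N <= INR n) by (apply le_INR; auto).
  pose proof (Phi_bound t (fst v) (snd v)) as HB.
  pose proof (Rmax_Cmod (v + 1)%C) as HC. simpl in HC.
  rewrite Rplus_0_r in HC.
  set (C := Cmod (v + 1)%C) in *.
  assert (Hx1 : Rabs (fst v + 1) <= C) by (eapply Rle_trans; [apply Rmax_l|apply HC]).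
  assert (Hy : Rabs (snd v) <= C) by (eapply Rle_trans; [apply Rmax_r|apply HC]).
  assert (Hx : Rabs (fst v) <= C + 1).
  { revert Hx1. unfold Rabs. repeat destruct Rcase_abs; lra. }
  pose proof (Rabs_pos t) as Ht.
  assert (Hbig : (3 + Rabs t) * (2*C+1) > (3 + Rabs t) * (2*R+1)).
  { assert (Phi t (fst v) (snd v) <= (3 + Rabs t) * (2*C+1)).
    { eapply Rle_trans; [apply HB|]. apply Rmult_le_compat_l; lra. }
    fold M. lra. }
  apply Rmult_lt_reg_l in Hbig; [|lra].
  assert (HCR : C > R) by lra.
  destruct (nz_of t v HE) as [_ Hv1].
  replace (1 - / (a * (v + 1)) - RtoC 1)%C with (- / (a * (v + 1)))%C by ring.
  rewrite Cmod_opp.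
  assert (Hprod : (a * (v+1))%C <> 0%C).
  { intro E. assert (Cmod (a * (v+1))%C = 0) by (rewrite E; apply Cmod_0).
    rewrite Cmod_mult in H. fold C in H. nra. }
  rewrite Cmod_inv by auto. rewrite Cmod_mult. fold C.
  assert (Hlt : / eps < Cmod a * C).
  { unfold R in HCR. 
    replace (/ eps) with (Cmod a * / (eps * Cmod a)) by (field; lra).
    apply Rmult_lt_compat_l; lra. }
  apply Rlt_le. rewrite <- (Rinv_inv eps) at 1.
  apply Rinv_lt_contravar; [|auto].
  apply Rmult_lt_0_compat; [apply Rinv_0_lt_compat; auto|nra].
Qed.
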